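(* The only rational periodic points of $f(x)=x^2-\tfrac{29}{16}$ are $-\tfrac14,-\tfrac74,\tfrac54$, which form a $3$-cycle. In particular $f$ has exactly $8$ rational points that are periodic or preperiodic.
   Context: A point $x$ is preperiodic for $f$ if some iterate $f^k(x)$, $k\ge1$, is periodic while $x$ itself is not periodic. *)

(* Defs.v *)
From mathcomp Require Import all_boot all_order all_algebra.
Set Implicit Arguments. Unset Strict Implicit. Unset Printing Implicit Defensive.
Import Order.TTheory GRing.Theory Num.Theory.
Local Open Scope ring_scope.

Definition periodic (T : Type) (g : T -> T) (x : T) : Prop :=
  exists n : nat, (0 < n)%N /\ iter n g x = x.

Definition preperiodic (T : Type) (g : T -> T) (x : T) : Prop :=
  (exists k : nat, (0 < k)%N /\ periodic g (iter k g x)) /\ ~ periodic g x.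

Definition f (x : rat) : rat := x ^+ 2 - 29%:R / 16%:R.

(* Main.v *)
Require Import Defs.
From mathcomp Require Import all_boot all_order all_algebra.
From mathcomp Require Import zify ring lra.
Import Order.TTheory GRing.Theory Num.Theory.
Local Open Scope ring_scope.

Lemma coprimez_MD (m q n : int) : coprimez m (q * m + n) = coprimez m n.
Proof. by rewrite /coprimez gcdzMDl. Qed.

Lemma coprime_pow2_odd (k : nat) (q : int) : (0 < k)%N -> coprimez (2 ^+ k) (q * 2 + 1).
Proof. move=> k0; rewrite coprimez_pexpl // coprimez_MD. by []. Qed.

Lemma odd_of_coprime (p d : int) : coprimez p (2 * d) -> exists s, p = s * 2 + 1.
Proof.
move=> cp; exists (p %/ 2)%Z.
have : (p %% 2 = 0 \/ p %% 2 = 1)%Z by lia.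
case=> h; last by lia.
have ep : p = 2 * (p %/ 2)%Z by lia.
move: cp; rewrite /coprimez ep -mulz_gcdr => /eqP; lia.
Qed.

Lemma dvd_ge (m b : int) : 0 < m -> 0 < b -> (m %| b)%Z -> exists q, 0 < q /\ b = q * m.
Proof. move=> m0 b0 /dvdzP [q eb]; exists q; split=> //; subst b; nia. Qed.
Lemma g1 (q m : int) : 0 < q -> 0 < m -> m <= q * m ^+ 2.
Proof. move=> q0 m0. nia. Qed.
Lemma g2 (q m : int) : 0 < q -> m ^+ 2 <= q * m ^+ 2.
Proof. move=> q0. nia. Qed.
Lemma g3 (m : int) : 3 <= m -> 3 * m <= m ^+ 2.
Proof. move=> m0. nia. Qed.
Lemma gA (q d : int) : 0 < q -> 0 < d -> d < q * (16 * d ^+ 2) /\ q * (16 * d ^+ 2) != 4.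
Proof. move=> q0 d0; have := g1 _ _ q0 d0; split; [lia| apply/eqP; lia]. Qed.
Lemma gB (q d : int) : 0 < q -> 0 < d -> d * 2 < q * (16 * d ^+ 2) /\ q * (16 * d ^+ 2) != 4.
Proof. move=> q0 d0; have := g1 _ _ q0 d0; split; [lia| apply/eqP; lia]. Qed.
Lemma gC (q d : int) : 0 < q -> 3 <= d -> d * 4 < q * (4 * d ^+ 2) /\ q * (4 * d ^+ 2) != 4.
Proof. move=> q0 d0; have := g2 _ d q0; have := g3 _ d0; split; [lia| apply/eqP; lia]. Qed.
Lemma gD (q d : int) : 0 < q -> 0 < d -> d * 8 < q * (64 * d ^+ 2) /\ q * (64 * d ^+ 2) != 4.
Proof. move=> q0 d0; have := g1 _ _ q0 d0; split; [lia| apply/eqP; lia]. Qed.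
Lemma sqp (m : int) : 0 < m -> 0 < m ^+ 2.
Proof. move=> m0; nia. Qed.

Lemma sq_even (s : int) : exists t, s ^+ 2 + s = t * 2.
Proof.
have [h|h] : s = (s %/ 2)%Z * 2 + 1 \/ s = (s %/ 2)%Z * 2 by lia.
  exists (2 * (s %/ 2)%Z ^+ 2 + 3 * (s %/ 2)%Z + 1); rewrite {1 2}h; ring.
exists (2 * (s %/ 2)%Z ^+ 2 + (s %/ 2)%Z); rewrite {1 2}h; ring.
Qed.

Definition Nf (p d : int) := 16 * p ^+ 2 - 29 * d ^+ 2.

Lemma caseA (p d b e : int) : 0 < d -> 0 < b -> coprimez p d -> d = e * 2 + 1 ->
  (16 * d ^+ 2 %| Nf p d * b)%Z -> d < b /\ b != 4.
Proof.
move=> d0 b0 cp ed hd.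
have c1 : coprimez (2 ^+ 4) (Nf p d).
  have -> : Nf p d = (8 * p ^+ 2 - 58 * (e ^+ 2 + e) - 15) * 2 + 1 by rewrite /Nf ed; ring.
  exact: coprime_pow2_odd.
have c2 : coprimez d (Nf p d).
  have -> : Nf p d = (- 29 * d) * d + 2 ^+ 4 * p ^+ 2 by rewrite /Nf; ring.
  rewrite coprimez_MD coprimezMr; apply/andP; split.
    by rewrite coprimez_sym ed; apply: coprime_pow2_odd.
  by apply: coprimezXr; rewrite coprimez_sym.
have c3 : coprimez (16 * d ^+ 2) (Nf p d).
  by rewrite coprimezMl c1 /=; apply: coprimezXl.
move: hd; rewrite Gauss_dvdzr // => hd.
have m0 : 0 < 16 * d ^+ 2 by have := sqp _ d0; lia.
have [q [q0 eb]] := dvd_ge _ _ m0 b0 hd.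
by rewrite eb; apply: gA.
Qed.

Lemma caseB (p d b m e : int) : 0 < d -> 0 < b -> coprimez p d -> d = m * 2 -> m = e * 2 + 1 ->
  (16 * d ^+ 2 %| Nf p d * b)%Z -> d < b /\ b != 4.
Proof.
move=> d0 b0 cp ed em hd.
pose N1 := 4 * p ^+ 2 - 29 * m ^+ 2.
move: hd; have -> : 16 * d ^+ 2 = 4 * (16 * m ^+ 2) by rewrite ed; ring.
have -> : Nf p d * b = 4 * (N1 * b) by rewrite /Nf /N1 ed; ring.
rewrite dvdz_mul2l // => hd.
have c1 : coprimez (2 ^+ 4) N1.
  have -> : N1 = (2 * p ^+ 2 - 58 * (e ^+ 2 + e) - 15) * 2 + 1 by rewrite /N1 em; ring.
  exact: coprime_pow2_odd.
have c2 : coprimez m N1.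
  have -> : N1 = (- 29 * m) * m + 2 ^+ 2 * p ^+ 2 by rewrite /N1; ring.
  rewrite coprimez_MD coprimezMr; apply/andP; split.
    by rewrite coprimez_sym em; apply: coprime_pow2_odd.
  apply: coprimezXr; rewrite coprimez_sym.
  by move: cp; rewrite ed coprimezMr => /andP[].
have c3 : coprimez (16 * m ^+ 2) N1.
  by rewrite coprimezMl c1 /=; apply: coprimezXl.
move: hd; rewrite Gauss_dvdzr // => hd.
have mp : 0 < m by lia.
have m0 : 0 < 16 * m ^+ 2 by have := sqp _ mp; lia.
have [q [q0 eb]] := dvd_ge _ _ m0 b0 hd.
by rewrite eb ed; apply: gB.
Qed.

Lemma caseC (p d b m e : int) : 0 < d -> 0 < b -> coprimez p d -> d = m * 4 -> m = e * 2 + 1 ->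
  d != 4 -> (16 * d ^+ 2 %| Nf p d * b)%Z -> d < b /\ b != 4.
Proof.
move=> d0 b0 cp ed em d4 hd.
have [s ps] : exists s, p = s * 2 + 1.
  by apply: (odd_of_coprime p (m * 2)); have -> : 2 * (m * 2) = d by rewrite ed; ring.
have [t1 et1] := sq_even s.
have [t2 et2] := sq_even e.
pose N3 := (t1 - 29 * t2 - 4) * 2 + 1.
have eN3 : N3 * 4 = p ^+ 2 - 29 * m ^+ 2.
  rewrite /N3 ps em; have -> : (s * 2 + 1) ^+ 2 = (s ^+ 2 + s) * 4 + 1 by ring.
  have -> : (e * 2 + 1) ^+ 2 = (e ^+ 2 + e) * 4 + 1 by ring.
  rewrite et1 et2; ring.
move: hd; have -> : 16 * d ^+ 2 = 64 * (4 * m ^+ 2) by rewrite ed; ring.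
have -> : Nf p d * b = 64 * (N3 * b).
  have -> : 64 * (N3 * b) = 16 * (N3 * 4) * b by ring.
  by rewrite eN3 /Nf ed; ring.
rewrite dvdz_mul2l // => hd.
have c1 : coprimez (2 ^+ 2) N3 by exact: coprime_pow2_odd.
have c2 : coprimez m N3.
  have : coprimez m (N3 * 4).
    rewrite eN3; have -> : p ^+ 2 - 29 * m ^+ 2 = (- 29 * m) * m + p ^+ 2 by ring.
    rewrite coprimez_MD; apply: coprimezXr; rewrite coprimez_sym.
    by move: cp; rewrite ed coprimezMr => /andP[].
  by rewrite coprimezMr => /andP[].
have c3 : coprimez (4 * m ^+ 2) N3.
  by rewrite coprimezMl c1 /=; apply: coprimezXl.
move: hd; rewrite Gauss_dvdzr // => hd.
have mp : 0 < m by lia.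
have m0 : 0 < 4 * m ^+ 2 by have := sqp _ mp; lia.
have [q [q0 eb]] := dvd_ge _ _ m0 b0 hd.
have m3 : 3 <= m.
  have : m != 1 by apply: contraNneq d4; rewrite ed => ->.
  move=> /eqP; lia.
by rewrite eb ed; apply: gC.
Qed.

Lemma caseD (p d b j : int) : 0 < d -> 0 < b -> coprimez p d -> d = j * 8 ->
  (16 * d ^+ 2 %| Nf p d * b)%Z -> d < b /\ b != 4.
Proof.
move=> d0 b0 cp ed hd.
have [s ps] : exists s, p = s * 2 + 1.
  by apply: (odd_of_coprime p (j * 4)); have -> : 2 * (j * 4) = d by rewrite ed; ring.
have [t1 et1] := sq_even s.
pose N4 := (4 * t1 - 58 * j ^+ 2) * 2 + 1.
have eN4 : N4 = p ^+ 2 - 116 * j ^+ 2.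
  have e : (s * 2 + 1) ^+ 2 = t1 * 8 + 1.
    have -> : t1 * 8 + 1 = (t1 * 2) * 4 + 1 by ring.
    by rewrite -et1; ring.
  by rewrite /N4 ps e; ring.
move: hd; have -> : 16 * d ^+ 2 = 16 * (64 * j ^+ 2) by rewrite ed; ring.
have -> : Nf p d * b = 16 * (N4 * b) by rewrite eN4 /Nf ed; ring.
rewrite dvdz_mul2l // => hd.
have c1 : coprimez (2 ^+ 6) N4 by exact: coprime_pow2_odd.
have c2 : coprimez j N4.
  rewrite eN4; have -> : p ^+ 2 - 116 * j ^+ 2 = (- 116 * j) * j + p ^+ 2 by ring.
  rewrite coprimez_MD; apply: coprimezXr; rewrite coprimez_sym.
  by move: cp; rewrite ed coprimezMr => /andP[].
have c3 : coprimez (64 * j ^+ 2) N4.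
  by rewrite coprimezMl c1 /=; apply: coprimezXl.
move: hd; rewrite Gauss_dvdzr // => hd.
have mp : 0 < j by lia.
have m0 : 0 < 64 * j ^+ 2 by have := sqp _ mp; lia.
have [q [q0 eb]] := dvd_ge _ _ m0 b0 hd.
by rewrite eb ed; apply: gD.
Qed.

Lemma keyint (p d b : int) : 0 < d -> 0 < b -> coprimez p d ->
  (16 * d ^+ 2 %| Nf p d * b)%Z -> d != 4 -> d < b /\ b != 4.
Proof.
move=> d0 b0 cp hd d4.
have [ed|ed] : d = (d %/ 2)%Z * 2 + 1 \/ d = (d %/ 2)%Z * 2 by lia.
  exact: (caseA _ _ _ _ d0 b0 cp ed hd).
set m := (d %/ 2)%Z in ed.
have [em|em] : m = (m %/ 2)%Z * 2 + 1 \/ m = (m %/ 2)%Z * 2 by lia.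
  exact: (caseB _ _ _ _ _ d0 b0 cp ed em hd).
set m2 := (m %/ 2)%Z in em.
have [em2|em2] : m2 = (m2 %/ 2)%Z * 2 + 1 \/ m2 = (m2 %/ 2)%Z * 2 by lia.
  have ed' : d = m2 * 4 by rewrite ed em; ring.
  exact: (caseC _ _ _ _ _ d0 b0 cp ed' em2 d4 hd).
have ed' : d = (m2 %/ 2)%Z * 8 by rewrite ed em {1}em2; ring.
exact: (caseD _ _ _ _ d0 b0 cp ed' hd).
Qed.

Lemma denq_step (x : rat) : denq x != 4 -> denq x < denq (f x) /\ denq (f x) != 4.
Proof.
move=> d4.
have E : (numq (f x) * (16 * denq x ^+ 2))%:~R = (Nf (numq x) (denq x) * denq (f x))%:~R :> rat.
  rewrite /Nf !(rmorphM, rmorphB, rmorphXn) /= !numqE /f.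
  have dn : (denq x)%:~R != 0 :> rat by rewrite intr_eq0 denq_neq0.
  rewrite !rmorph_nat.
  by field.
move/eqP: E; rewrite eqr_int => /eqP E.
apply: (keyint (numq x)) => //.
- exact: coprime_num_den.
- by apply/dvdzP; exists (numq (f x)); rewrite E.
Qed.

Lemma denq_iter (x : rat) : denq x != 4 -> forall n, (0 < n)%N ->
  denq x < denq (iter n f x) /\ denq (iter n f x) != 4.
Proof.
move=> d4; elim=> [//|n IH] _.
case: n IH => [_|n IH]; first exact: denq_step.
have [h1 h2] := IH isT.
have [h3 h4] := denq_step _ h2.
rewrite iterS; split=> //; exact: lt_trans h3.
Qed.

Lemma esc_step (x : rat) : 2 <= `|x| -> 2 <= `|f x| /\ `|x| < `|f x|.
Proof.
move=> h.
have xt : x ^+ 2 = `|x| ^+ 2 by rewrite real_normK // num_real.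
have hf : f x <= `|f x| by apply: ler_norm.
move: hf; rewrite /f xt => hf.
split; nra.
Qed.

Lemma esc_iter (x : rat) : 2 <= `|x| -> forall n, (0 < n)%N ->
  2 <= `|iter n f x| /\ `|x| < `|iter n f x|.
Proof.
move=> h; elim=> [//|n IH] _.
case: n IH => [_|n IH]; first exact: esc_step.
have [h1 h2] := IH isT.
have [h3 h4] := esc_step _ h1.
rewrite iterS; split=> //; exact: lt_trans h4.
Qed.

Lemma periodic_prop (x : rat) : periodic f x -> `|x| < 2 /\ denq x = 4.
Proof.
move=> [n [n0 e]]; split.
  rewrite ltNge; apply/negP => h.
  have [_ h2] := esc_iter _ h _ n0; rewrite e in h2; by rewrite ltxx in h2.
apply/eqP; apply/negP => /negP d4.
have [h1 _] := denq_iter _ d4 _ n0; rewrite e in h1; by rewrite ltxx in h1.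
Qed.

Lemma pp_prop (x : rat) : periodic f x \/ preperiodic f x -> `|x| < 2 /\ denq x = 4.
Proof.
case; first exact: periodic_prop.
move=> [[k [k0 pk]] _].
have [h1 h2] := periodic_prop _ pk.
split.
  rewrite ltNge; apply/negP => h.
  have [h3 _] := esc_iter _ h _ k0; by move: h1; rewrite ltNge h3.
apply/eqP; apply/negP => /negP d4.
have [_ h3] := denq_iter _ d4 _ k0; by rewrite h2 in h3.
Qed.

Definition C3 : seq rat := [:: - (1%:R / 4%:R); - (7%:R / 4%:R); 5%:R / 4%:R].
Definition S5 : seq rat := [:: 1%:R / 4%:R; 7%:R / 4%:R; - (5%:R / 4%:R); 3%:R / 4%:R; - (3%:R / 4%:R)].

Lemma cand (x : rat) : `|x| < 2 -> denq x = 4 -> x \in C3 ++ S5.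
Proof.
move=> hx d4.
have e1 := numqE x; rewrite d4 in e1.
have ex : x = (numq x)%:~R / (4 : int)%:~R.
  by rewrite e1 mulfK // intr_eq0.
have h1 : ((numq x)%:~R : rat) < (8 : int)%:~R.
  rewrite e1; move: hx; rewrite ltr_norml => /andP[a b].
  have -> : ((8 : int)%:~R : rat) = 8 by [].
  have -> : ((4 : int)%:~R : rat) = 4 by [].
  lra.
have h2 : ((-8 : int)%:~R : rat) < (numq x)%:~R.
  rewrite e1; move: hx; rewrite ltr_norml => /andP[a b].
  have -> : ((-8 : int)%:~R : rat) = -8 by [].
  have -> : ((4 : int)%:~R : rat) = 4 by [].
  lra.
rewrite ltr_int in h1; rewrite ltr_int in h2.
have cp := coprime_num_den x.
have cp' : coprimez (numq x) (2 * 2) by move: cp; rewrite d4.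
have [s es] := odd_of_coprime _ _ cp'.
have : numq x = -7 \/ numq x = -5 \/ numq x = -3 \/ numq x = -1 \/
       numq x = 1 \/ numq x = 3 \/ numq x = 5 \/ numq x = 7 by lia.
move=> H; rewrite ex.
by case: H=> [->|[->|[->|[->|[->|[->|[->|->]]]]]]].
Qed.

Lemma tS5 : all (fun y => (iter 2 f y \in C3) && (f y != y) && (y \notin C3)) S5.
Proof. vm_compute. reflexivity. Qed.
Lemma tC3 : all (fun y => (f y \in C3) && (iter 3 f y == y)) C3.
Proof. vm_compute. reflexivity. Qed.

Lemma C3_iter (y : rat) : y \in C3 -> forall n, iter n f y \in C3.
Proof.
move=> hy; elim=> [//|n IH] /=.
by move/allP: tC3 => /(_ _ IH) /andP[].
Qed.

Lemma perC3 (y : rat) : y \in C3 -> periodic f y.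
Proof.
move=> hy; exists 3%N; split=> //.
by move/allP: tC3 => /(_ _ hy) /andP[_ /eqP].
Qed.

Lemma notper (y : rat) : y \in S5 -> ~ periodic f y.
Proof.
move=> hy [n [n0 e]].
move/allP: tS5 => /(_ _ hy) /andP[/andP[h2 h1] h3].
case: n n0 e => [//|[_ e|m _ e]].
  by move: h1; rewrite -{2}e eqxx.
have : iter (m + 2) f y \in C3 by rewrite iterD; apply: C3_iter.
by rewrite addn2 e (negbTE h3).
Qed.

Theorem corollary4 :
  (* the rational periodic points are exactly -1/4, -7/4, 5/4 *)
  (forall x : rat, periodic f x <->
     x \in [:: - (1%:R / 4%:R); - (7%:R / 4%:R); 5%:R / 4%:R]) /\
  (* and they form a 3-cycle *)
  (f (- (1%:R / 4%:R)) = - (7%:R / 4%:R) /\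
   f (- (7%:R / 4%:R)) = 5%:R / 4%:R /\
   f (5%:R / 4%:R) = - (1%:R / 4%:R)) /\
  (* exactly 8 rational points are periodic or preperiodic *)
  (exists s : seq rat, uniq s /\ size s = 8%N /\
     forall x : rat, (periodic f x \/ preperiodic f x) <-> x \in s).
Proof.
split.
  move=> x; change (periodic f x <-> x \in C3); split; last exact: perC3.
  move=> P; have [h1 h2] := pp_prop _ (or_introl P).
  move: (cand _ h1 h2); rewrite mem_cat => /orP[//|h].
  by case: (notper _ h P).
split; first by split; [apply/eqP | split; apply/eqP]; vm_compute.
exists (C3 ++ S5); split; first by vm_compute. split; first by [].
move=> x; split.
  by move=> H; have [h1 h2] := pp_prop _ H; apply: cand.
rewrite mem_cat => /orP[h|h]; first by left; apply: perC3.
right; split; last exact: notper.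
exists 2%N; split=> //; apply: perC3.
by move/allP: tS5 => /(_ _ h) /andP[/andP[]].
Qed.
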